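(* Let $\Lambda$ be a lattice and $B\subset\Lambda$ a finite subset. Then $B$ has an integral decomposition $B=\bigcup_i B_i$ in which every $B_i$ is irreducible, and this decomposition is unique up to the order of the factors.
   Context: A lattice is a free abelian group of finite rank. For a subset $A\subseteq\Lambda$, $\langle A\rangle_{\mathbb Z}$ denotes the subgroup generated by $A$ and $\langle A\rangle_{\mathbb C}$ the complex subspace of $\Lambda\otimes_{\mathbb Z}\mathbb C$ it spans. The completion of a subgroup $\Delta\subseteq\Lambda$ is $\overline{\Delta}=\langle\Delta\rangle_{\mathbb C}\cap\Lambda$. An integral decomposition of a finite set $B\subset\Lambda$ is a partition $B=\bigcup_i B_i$ (into nonempty parts) such that $\overline{\langle B\rangle_{\mathbb Z}}=\bigoplus_i\overline{\langle B_i\rangle_{\mathbb Z}}$ (internal direct sum). $B$ is irreducible if it has no nontrivial integral decomposition. *)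

(* Defs.v *)
(* A lattice of rank n is modelled as Z^n = 'rV[int]_n. *)
From mathcomp Require Import all_boot all_order all_algebra all_field.
From mathcomp Require Import finmap.
Set Implicit Arguments. Unset Strict Implicit. Unset Printing Implicit Defensive.
Import Order.TTheory GRing.Theory Num.Theory.
Local Open Scope fset_scope.
Local Open Scope ring_scope.

Definition zgen n (A : {fset 'rV[int]_n}) : 'rV[int]_n -> Prop :=
  fun v => exists c : 'rV[int]_n -> int, v = \sum_(a <- A) c a *: a.

(* embedding Lambda -> Lambda (x) C, with C modelled by algC *)
Definition toC n (v : 'rV[int]_n) : 'rV[algC]_n := map_mx (fun z : int => z%:~R) v.

(* completion of a subgroup D : <D>_C cap Lambda *)
Definition completion n (D : 'rV[int]_n -> Prop) : 'rV[int]_n -> Prop :=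
  fun v => exists (s : seq 'rV[int]_n) (c : 'rV[int]_n -> algC),
    (forall a, a \in s -> D a) /\ toC v = \sum_(a <- s) c a *: toC a.

Definition internal_direct_sum n (I : choiceType) (P : {fset I})
  (D : I -> 'rV[int]_n -> Prop) (G : 'rV[int]_n -> Prop) : Prop :=
  (forall v, G v <-> exists f : I -> 'rV[int]_n,
      (forall X, X \in P -> D X (f X)) /\ v = \sum_(X <- P) f X) /\
  (forall f g : I -> 'rV[int]_n,
      (forall X, X \in P -> D X (f X)) -> (forall X, X \in P -> D X (g X)) ->
      \sum_(X <- P) f X = \sum_(X <- P) g X -> forall X, X \in P -> f X = g X).

Definition is_partition n (B : {fset 'rV[int]_n}) (P : {fset {fset 'rV[int]_n}}) : Prop :=
  (forall X, X \in P -> X != fset0) /\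
  (forall X Y, X \in P -> Y \in P -> X != Y -> [disjoint X & Y]) /\
  (forall x, x \in B <-> exists2 X, X \in P & x \in X).

Definition integral_decomposition n (B : {fset 'rV[int]_n})
  (P : {fset {fset 'rV[int]_n}}) : Prop :=
  is_partition B P /\
  internal_direct_sum P (fun X => completion (zgen X)) (completion (zgen B)).

Definition irreducible_set n (B : {fset 'rV[int]_n}) : Prop :=
  forall P, integral_decomposition B P -> (#|` P| <= 1)%N.

(* Main.v *)
Require Import Defs.
From mathcomp Require Import all_boot all_order all_algebra all_field.
From mathcomp Require Import finmap.
From mathcomp Require Import zify ring.
From Stdlib Require Import ClassicalEpsilon Classical Lia.
Set Implicit Arguments. Unset Strict Implicit. Unset Printing Implicit Defensive.
Import Order.TTheory GRing.Theory Num.Theory.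

Section Aux.
Local Open Scope fset_scope.
Local Open Scope ring_scope.
Variable n : nat.
Notation V := 'rV[int]_n.
Definition qv (v : V) : 'rV[rat]_n := map_mx (fun z : int => z%:~R) v.
Definition SS (X : seq V) (c : V -> rat) : 'rV[rat]_n := \sum_(a <- X) c a *: qv a.
Definition integral (w : 'rV[rat]_n) := exists v, w = qv v.

Lemma qv_inj : injective qv.
Proof.
move=> u v /matrixP H; apply/matrixP => i j; have := H i j; rewrite !mxE.
exact: intr_inj.
Qed.

Lemma qvD u v : qv (u + v) = qv u + qv v.
Proof. by apply/matrixP=> i j; rewrite !mxE rmorphD. Qed.
Lemma qvN u : qv (- u) = - qv u.
Proof. by apply/matrixP=> i j; rewrite !mxE rmorphN. Qed.
Lemma qv0 : qv 0 = 0.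
Proof. by apply/matrixP=> i j; rewrite !mxE. Qed.
Lemma qvZ (z : int) u : qv (z *: u) = z%:~R *: qv u.
Proof. by apply/matrixP=> i j; rewrite !mxE rmorphM. Qed.
Lemma qv_sum (I : Type) (s : seq I) (F : I -> V) :
  qv (\sum_(a <- s) F a) = \sum_(a <- s) qv (F a).
Proof.
elim: s => [|a s IH]; first by rewrite !big_nil qv0.
by rewrite !big_cons qvD IH.
Qed.

Lemma toC_qv v : toC v = map_mx ratr (qv v).
Proof. by rewrite /toC; apply/matrixP=> i j; rewrite !mxE ratr_int. Qed.

Lemma toC_comb (s : seq V) (c : V -> int) :
  toC (\sum_(x <- s) c x *: x) = \sum_(x <- s) (c x)%:~R *: toC x.
Proof.
rewrite /toC; apply/matrixP=> i j; rewrite mxE !summxE rmorph_sum.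
by apply: eq_bigr => x _; rewrite !mxE rmorphM.
Qed.

Lemma map_ratr_comb (s : seq V) (d : V -> rat) :
  map_mx ratr (SS s d) = \sum_(x <- s) ratr (d x) *: toC x.
Proof.
rewrite /toC; apply/matrixP=> i j; rewrite mxE /SS !summxE rmorph_sum.
by apply: eq_bigr => x _; rewrite !mxE rmorphM rmorph_int.
Qed.

Lemma descent (s : seq V) (v : V) (e : V -> algC) : uniq s ->
  toC v = \sum_(a <- s) e a *: toC a -> exists d, qv v = SS s d.
Proof.
move=> us He.
pose M := \matrix_(i < size s) qv (nth 0 s i).
have H1 : (map_mx (ratr : rat -> algC) (qv v) <= map_mx (ratr : rat -> algC) M)%MS.
  rewrite (_ : map_mx ratr (qv v) = toC v); last first.
    by apply/matrixP=> i j; rewrite /toC !mxE rmorph_int.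
  rewrite He (big_nth 0) big_mkord.
  have -> : \sum_(i < size s) e (nth 0 s i) *: toC (nth 0 s i) =
            (\row_(i < size s) e (nth 0 s i)) *m map_mx ratr M.
    rewrite mulmx_sum_row; apply: eq_bigr => i _.
    rewrite mxE; congr (_ *: _); apply/matrixP=> k j.
    by rewrite /toC !mxE ord1 rmorph_int.
  exact: submxMl.
rewrite map_submx in H1; have [D HD] := submxP H1.
exists (fun a => nth 0 [seq D 0 i | i <- enum 'I_(size s)] (index a s)).
rewrite HD mulmx_sum_row /SS (big_nth 0) big_mkord; apply: eq_bigr => i _.
rewrite index_uniq // (nth_map i) ?size_enum_ord // nth_ord_enum; congr (_ *: _).
by apply/matrixP=> k j; rewrite !mxE ord1.
Qed.

Lemma zgen_mem (X : {fset V}) a : a \in X -> zgen X a.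
Proof.
move=> aX; exists (fun x => ((x == a)%:R : int)).
rewrite (bigD1_seq a) //= eqxx scale1r big1 ?addr0 // => x /negbTE ->.
by rewrite scale0r.
Qed.

Lemma compl_iff (X : {fset V}) v :
  completion (zgen X) v <-> exists d, qv v = SS X d.
Proof.
split.
  move=> [s [c [Hs Hv]]].
  have [E HE] : exists E : V -> algC,
      \sum_(a <- s) c a *: toC a = \sum_(x <- X) E x *: toC x.
    elim: s Hs {Hv} => [|a s IH] Hs.
      by exists (fun _ => 0); rewrite big_nil big1 // => x _; rewrite scale0r.
    have [|E HE] := IH; first by move=> b bs; apply: Hs; rewrite inE bs orbT.
    have [ca Ha] := Hs a (mem_head _ _).
    exists (fun x => c a * (ca x)%:~R + E x).
    rewrite big_cons HE Ha toC_comb scaler_sumr -big_split /=.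
    by apply: eq_bigr => x _; rewrite scalerA scalerDl.
  by apply: (@descent X v E (fset_uniq X)); rewrite Hv.
move=> [d Hd]; exists X, (fun a => ratr (d a)); split.
  by move=> a; apply: zgen_mem.
rewrite -map_ratr_comb -Hd.
by apply/matrixP=> i j; rewrite /toC !mxE rmorph_int.
Qed.

Lemma sum_sub (R : zmodType) (s t : seq V) (F : V -> R) :
  uniq s -> uniq t -> {subset s <= t} ->
  \sum_(a <- s) F a = \sum_(a <- t | a \in s) F a.
Proof.
move=> us ut st; rewrite -[RHS]big_filter; apply: perm_big.
apply: uniq_perm => //; first exact: filter_uniq.
move=> x; rewrite mem_filter; apply/idP/andP => [xs|[]//].
by split=> //; apply: st.
Qed.

Lemma part_sub (B : {fset V}) P X x :
  is_partition B P -> X \in P -> x \in X -> x \in B.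
Proof. by move=> [_ [_ H]] XP xX; apply/H; exists X. Qed.

Lemma sum_part (R : zmodType) (B : {fset V}) (P : {fset {fset V}}) (F : V -> R) :
  is_partition B P ->
  \sum_(a <- B) F a = \sum_(X <- P) \sum_(a <- X) F a.
Proof.
move=> HP; have [_ [Hd Hc]] := HP.
transitivity (\sum_(X <- P) \sum_(a <- B) (if a \in X then F a else 0)).
  rewrite exchange_big /= big_seq [RHS]big_seq; apply: eq_bigr => a aB.
  have [X0 X0P aX0] := (proj1 (Hc a) aB).
  rewrite (bigD1_seq X0) //= aX0 big_seq_cond big1 ?addr0 // => Y /andP[YP YX0].
  case: ifP => // aY; exfalso.
  by have /fdisjointP/(_ a aY) := Hd Y X0 YP X0P YX0; rewrite aX0.
rewrite big_seq [RHS]big_seq; apply: eq_bigr => X XP.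
rewrite -big_mkcond (sum_sub _ (fset_uniq X) (fset_uniq B)) //.
by move=> x xX; apply: (part_sub HP XP xX).
Qed.

Definition IC (B : {fset V}) (P : {fset {fset V}}) :=
  forall c, integral (SS B c) -> forall X, X \in P -> integral (SS X c).
Definition mask (X : {fset V}) (c : V -> rat) :=
  fun a => if a \in X then c a else 0.

Lemma SS_mask (X B : {fset V}) c : X `<=` B -> SS X c = SS B (mask X c).
Proof.
move=> /fsubsetP XB; rewrite /SS (sum_sub _ (fset_uniq X) (fset_uniq B) XB).
rewrite big_mkcond; apply: eq_bigr => a _; rewrite /mask.
by case: ifP => _ //; rewrite scale0r.
Qed.

Lemma SSD (X : seq V) c1 c2 : SS X (fun a => c1 a + c2 a) = SS X c1 + SS X c2.
Proof. by rewrite /SS -big_split; apply: eq_bigr => a _; rewrite scalerDl. Qed.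
Lemma SSN (X : seq V) c : SS X (fun a => - c a) = - SS X c.
Proof. by rewrite /SS -sumrN; apply: eq_bigr => a _; rewrite scaleNr. Qed.
Lemma SSZ (X : seq V) t c : SS X (fun a => t * c a) = t *: SS X c.
Proof. by rewrite /SS scaler_sumr; apply: eq_bigr => a _; rewrite scalerA. Qed.
Lemma SS_eq (X : seq V) c1 c2 : {in X, c1 =1 c2} -> SS X c1 = SS X c2.
Proof. by move=> H; rewrite /SS big_seq [RHS]big_seq; apply: eq_bigr => a /H ->. Qed.

Lemma half_not_int (z : int) : (z%:~R : rat) <> 2^-1.
Proof.
move=> H.
have H2 : ((2 * z)%:~R : rat) = (1%:~R) by rewrite intrM H mulfV.
move/intr_inj: H2; lia.
Qed.

Lemma IC_zero B P : IC B P -> forall c, SS B c = 0 ->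
  forall X, X \in P -> SS X c = 0.
Proof.
move=> HI c Hc X XP; apply/matrixP => i j; rewrite [RHS]mxE.
case: (eqVneq (SS X c i j) 0) => // Hne; exfalso.
have [|u Hu] := HI (fun a => (2 * SS X c i j)^-1 * c a) _ X XP.
  by rewrite SSZ Hc scaler0; exists 0; rewrite qv0.
move/matrixP/(_ i j): Hu; rewrite SSZ !mxE.
rewrite invfM -mulrA mulVf // mulr1 => /esym; exact: half_not_int.
Qed.

Notation L X := (completion (zgen X)).

Lemma L0 (X : {fset V}) : L X 0.
Proof. by apply/compl_iff; exists (fun _ => 0); rewrite qv0 /SS big1 // => a _; rewrite scale0r. Qed.

Lemma L_add (X : {fset V}) u v : L X u -> L X v -> L X (u + v).
Proof.
move=> /compl_iff [c1 H1] /compl_iff [c2 H2]; apply/compl_iff.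
by exists (fun a => c1 a + c2 a); rewrite SSD qvD H1 H2.
Qed.

Lemma L_opp (X : {fset V}) u : L X u -> L X (- u).
Proof.
move=> /compl_iff [c1 H1]; apply/compl_iff.
by exists (fun a => - c1 a); rewrite SSN qvN H1.
Qed.

Lemma L_sub (X : {fset V}) u v : L X u -> L X v -> L X (u - v).
Proof. by move=> Hu Hv; apply: L_add => //; apply: L_opp. Qed.

Lemma L_scale (X : {fset V}) (z : int) u : L X u -> L X (z *: u).
Proof.
move=> /compl_iff [c1 H1]; apply/compl_iff.
by exists (fun a => z%:~R * c1 a); rewrite SSZ qvZ H1.
Qed.

Lemma L_mono (X B : {fset V}) u : X `<=` B -> L X u -> L B u.
Proof.
move=> XB /compl_iff [c1 H1]; apply/compl_iff.
by exists (mask X c1); rewrite -SS_mask.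
Qed.

Lemma unq_qv u : map_mx numq (qv u) = u.
Proof. by apply/matrixP=> i j; rewrite !mxE numq_int. Qed.

Lemma part_fsub (B : {fset V}) P X : is_partition B P -> X \in P -> X `<=` B.
Proof. by move=> HP XP; apply/fsubsetP => x; apply: part_sub HP XP. Qed.

Lemma dec_IC B P : integral_decomposition B P -> IC B P.
Proof.
move=> [HP [Hspan Huniq]] c [v Hv] X0 X0P.
have LB : L B v by apply/compl_iff; exists c.
have [f [Hf Hvf]] := proj1 (Hspan v) LB.
pose m : int := \prod_(b <- B) denq (c b).
have m0 : (m%:~R : rat) != 0.
  rewrite intr_eq0 prodf_seq_neq0; apply/allP => b _; exact: denq_neq0.
pose zf b := numq (c b) * \prod_(b' <- B | b' != b) denq (c b').
have Hzf : forall b, b \in B -> ((zf b)%:~R : rat) = m%:~R * c b.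
  move=> b bB; rewrite /m (bigD1_seq b) //= /zf !intrM numqE; ring.
pose g X := \sum_(a <- X) zf a *: a.
have Hg : forall X, X \in P -> qv (g X) = m%:~R *: SS X c.
  move=> X XP; rewrite qv_sum -SSZ /SS big_seq [RHS]big_seq.
  by apply: eq_bigr => a aX; rewrite qvZ Hzf //; apply: part_sub HP XP aX.
have gL : forall X, X \in P -> L X (g X).
  move=> X XP; apply/compl_iff; exists (fun a => (zf a)%:~R).
  by rewrite qv_sum /SS; apply: eq_bigr => a _; rewrite qvZ.
have hL : forall X, X \in P -> L X (m *: f X).
  by move=> X XP; apply: L_scale; apply: Hf.
have Hsum : \sum_(X <- P) g X = \sum_(X <- P) m *: f X.
  apply: qv_inj; transitivity (m%:~R *: qv v).
    rewrite qv_sum big_seq (eq_bigr _ (fun X XP => Hg X XP)) -big_seq.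
    by rewrite -scaler_sumr -Hv /SS (sum_part _ HP).
  by rewrite Hvf -qvZ scaler_sumr.
have := Huniq g (fun X => m *: f X) gL hL Hsum X0 X0P.
move=> /(congr1 qv); rewrite Hg // qvZ => /(scalerI m0) ->.
by exists (f X0).
Qed.

Lemma IC_dec B P : is_partition B P -> IC B P -> integral_decomposition B P.
Proof.
move=> HP HI; split => //; split.
  move=> v; split.
    move/compl_iff => [c Hc].
    exists (fun X : {fset V} => map_mx numq (SS X c)); split.
      move=> X XP; have [u Hu] := HI c (ex_intro _ v (esym Hc)) X XP.
      by apply/compl_iff; exists c; rewrite Hu unq_qv.
    apply: qv_inj; rewrite Hc qv_sum /SS (sum_part _ HP) big_seq [RHS]big_seq.
    apply: eq_bigr => X XP; have [u Hu] := HI c (ex_intro _ v (esym Hc)) X XP.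
    by move: Hu; rewrite /SS => ->; rewrite unq_qv.
  move=> [f [Hf ->]]; rewrite big_seq; apply: (big_ind (L B)).
  - exact: L0.
  - exact: L_add.
  - by move=> X XP; apply: (L_mono (part_fsub HP XP)); apply: Hf.
move=> f g Hf Hg Hs X0 X0P.
have Hd : forall X, exists d, X \in P -> qv (f X - g X) = SS X d.
  move=> X; case: (boolP (X \in P)) => XP; last by exists (fun _ => 0).
  have /compl_iff [d Hd] := L_sub (Hf X XP) (Hg X XP).
  by exists d.
pose dd X := proj1_sig (constructive_indefinite_description _ (Hd X)).
have Hdd X : X \in P -> qv (f X - g X) = SS X (dd X).
  exact: proj2_sig (constructive_indefinite_description _ (Hd X)).
pose D a := \sum_(Y <- P) mask Y (dd Y) a.
have [_ [Hdis _]] := HP.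
have HD : forall X, X \in P -> SS X D = SS X (dd X).
  move=> X XP; apply: SS_eq => a aX; rewrite /D (bigD1_seq X) //= /mask aX.
  rewrite big_seq_cond big1 ?addr0 // => Y /andP[YP YX].
  case: ifP => // aY; exfalso.
  by have /fdisjointP/(_ a aY) := Hdis Y X YP XP YX; rewrite aX.
have E : forall X, \sum_(a <- X) D a *: qv a = SS X D by [].
have HB : SS B D = 0.
  rewrite /SS (sum_part _ HP) big_seq.
  rewrite (eq_bigr (fun X => qv (f X - g X))); last first.
    by move=> X XP; rewrite E HD // Hdd.
  by rewrite -big_seq -qv_sum sumrB Hs subrr qv0.
have := IC_zero HI HB X0P; rewrite HD // -Hdd // -qv0 => /qv_inj.
by move/eqP; rewrite subr_eq0 => /eqP.
Qed.

Definition Dec' (B : {fset V}) (P : {fset {fset V}}) := is_partition B P /\ IC B P.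
Definition irr' (X : {fset V}) := forall R, Dec' X R -> (#|` R| <= 1)%N.

Lemma card_le1_eq (R : {fset {fset V}}) a b :
  (#|` R| <= 1)%N -> a \in R -> b \in R -> a = b.
Proof.
move=> H aR bR; apply/eqP; apply: contraT => ab.
have := cardfsD1 a R; rewrite aR => E.
have : #|` R `\ a| = 0%N by move: H; rewrite E /=; case: (#|` _|).
move/cardfs0_eq => E0.
have : b \in R `\ a by apply/fsetD1P; split => //; rewrite eq_sym.
by rewrite E0 inE.
Qed.

Definition restr (X : {fset V}) (Q : {fset {fset V}}) :=
  [fset X `&` Y | Y in Q & X `&` Y != fset0].

Lemma restrP (X : {fset V}) (Q : {fset {fset V}}) (Z : {fset V}) :
  reflect (exists2 Y, Y \in Q /\ X `&` Y != fset0 & Z = X `&` Y) (Z \in restr X Q).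
Proof.
rewrite /restr; apply: (iffP idP).
  by move/imfsetP => [Y]; rewrite /= inE => /andP [YQ ne] ->; exists Y.
by move=> [Y [YQ ne] ->]; apply/imfsetP; exists Y => //; rewrite /= inE YQ.
Qed.

Lemma restr_dec (B : {fset V}) (Q : {fset {fset V}}) (X : {fset V}) : Dec' B Q -> X `<=` B -> Dec' X (restr X Q).
Proof.
move=> [HP HI] /fsubsetP XB; have [Hne [Hdis Hc]] := HP.
split; first split; [|split|].
- by move=> Z /restrP [Y [_ ne] ->].
- move=> Z1 Z2 /restrP [Y1 [Y1Q _] ->] /restrP [Y2 [Y2Q _] ->] ne.
  have Y12 : Y1 != Y2 by apply: contraNneq ne => ->.
  have /fdisjointP D := Hdis Y1 Y2 Y1Q Y2Q Y12.
  apply/fdisjointP => a; rewrite !in_fsetI => /andP [_ aY1].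
  by rewrite (negbTE (D a aY1)) andbF.
- move=> x; split.
    move=> xX; have [Y YQ xY] := proj1 (Hc x) (XB x xX).
    exists (X `&` Y); last by rewrite in_fsetI xX xY.
    apply/restrP; exists Y => //; split => //.
    by apply/fset0Pn; exists x; rewrite in_fsetI xX xY.
  by move=> [Z /restrP [Y _ ->]]; rewrite in_fsetI => /andP [].
move=> c Hint Z /restrP [Y [YQ _] ->].
have XB' : X `<=` B by apply/fsubsetP.
have YB : Y `<=` B by apply/fsubsetP => y yY; apply: part_sub HP YQ yY.
have := HI (mask X c); rewrite -SS_mask // => /(_ Hint Y YQ).
rewrite (SS_mask c (fsubsetIr X Y)).
have -> : SS Y (mask (X `&` Y) c) = SS Y (mask X c); last by [].
by apply: SS_eq => a aY; rewrite /mask in_fsetI aY andbT.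
Qed.

Lemma restr_mem (X Y : {fset V}) (Q : {fset {fset V}}) x :
  Y \in Q -> x \in X -> x \in Y -> X `&` Y \in restr X Q.
Proof.
move=> YQ xX xY; apply/restrP; exists Y => //; split => //.
by apply/fset0Pn; exists x; rewrite in_fsetI xX xY.
Qed.

Lemma sub_in (B : {fset V}) P Q X : Dec' B P -> Dec' B Q -> irr' X ->
  X \in P -> exists2 Y, Y \in Q & X `<=` Y.
Proof.
move=> [HP IP] HQ irrX XP.
have XB := part_fsub HP XP.
have H1 := irrX _ (restr_dec HQ XB).
have [Hne _] := HP; have [[_ [_ Hc]] _] := HQ.
have /fset0Pn [x xX] := Hne X XP.
have [Y YQ xY] := proj1 (Hc x) (part_sub HP XP xX).
exists Y => //; apply/fsubsetP => a aX.
have [Y' Y'Q aY'] := proj1 (Hc a) (part_sub HP XP aX).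
have E := card_le1_eq H1 (restr_mem YQ xX xY) (restr_mem Y'Q aX aY').
have : a \in X `&` Y' by rewrite in_fsetI aX aY'.
by rewrite -E in_fsetI => /andP [].
Qed.

Lemma eq_parts (B : {fset V}) P X X' : is_partition B P ->
  X \in P -> X' \in P -> X `<=` X' -> X = X'.
Proof.
move=> [Hne [Hdis _]] XP X'P XX'; apply/eqP; apply: contraT => ne.
have /fset0Pn [x xX] := Hne X XP.
have /fdisjointP D := Hdis X X' XP X'P ne.
by have := D x xX; rewrite (fsubsetP XX' x xX).
Qed.

Lemma P_sub_Q (B : {fset V}) P Q : Dec' B P -> Dec' B Q ->
  (forall X, X \in P -> irr' X) -> (forall X, X \in Q -> irr' X) ->
  forall X, X \in P -> X \in Q.
Proof.
move=> HP HQ IP IQ X XP.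
have [Y YQ XY] := sub_in HP HQ (IP X XP) XP.
have [X' X'P YX'] := sub_in HQ HP (IQ Y YQ) YQ.
have E := eq_parts HP.1 XP X'P (fsubset_trans XY YX').
have -> : X = Y by apply/eqP; rewrite eqEfsubset XY /= E YX'.
by [].
Qed.

Lemma uniq_dec (B : {fset V}) P Q : Dec' B P -> Dec' B Q ->
  (forall X, X \in P -> irr' X) -> (forall X, X \in Q -> irr' X) -> P = Q.
Proof.
move=> HP HQ IP IQ; apply/fsetP => X; apply/idP/idP.
  exact: P_sub_Q HP HQ IP IQ X.
exact: P_sub_Q HQ HP IQ IP X.
Qed.

Lemma refine_dec (B X : {fset V}) P Q : Dec' B P -> X \in P -> Dec' X Q ->
  Dec' B ((P `\ X) `|` Q).
Proof.
move=> [HP IP] XP [HQ IQ].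
have [Pne [Pdis Pc]] := HP; have [Qne [Qdis Qc]] := HQ.
have QX : forall Y, Y \in Q -> Y `<=` X by move=> Y YQ; apply: part_fsub HQ YQ.
have DX : forall Z, Z \in P `\ X -> forall a, a \in Z -> a \notin X.
  move=> Z /fsetD1P [ZX ZP] a aZ.
  by have /fdisjointP := Pdis Z X ZP XP ZX; apply.
split; first split; [|split|].
- by move=> Z /fsetUP [/fsetD1P [_ ZP]|ZQ]; [apply: Pne|apply: Qne].
- move=> Z1 Z2 /fsetUP [H1|H1] /fsetUP [H2|H2] ne.
  + by move: H1 H2 => /fsetD1P [_ ?] /fsetD1P [_ ?]; apply: Pdis.
  + apply/fdisjointP => a aZ1; apply: contra (DX Z1 H1 a aZ1).
    exact: (fsubsetP (QX Z2 H2)).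
  + apply/fdisjointP => a aZ1; apply/negP => aZ2.
    by have := DX Z2 H2 a aZ2; rewrite (fsubsetP (QX Z1 H1) a aZ1).
  + exact: Qdis.
- move=> x; split.
    move=> xB; have [Z ZP xZ] := proj1 (Pc x) xB.
    case: (eqVneq Z X) => [EZ|ZX].
      have [Y YQ xY] := proj1 (Qc x) (ltac:(by rewrite -EZ)).
      by exists Y => //; rewrite in_fsetU YQ orbT.
    by exists Z => //; rewrite in_fsetU in_fsetD1 ZX ZP.
  move=> [Z /fsetUP [/fsetD1P [_ ZP]|ZQ] xZ]; first exact: part_sub HP ZP xZ.
  apply: part_sub HP XP _; exact: part_sub HQ ZQ xZ.
move=> c Hc Z /fsetUP [/fsetD1P [_ ZP]|ZQ]; first exact: IP.
by apply: IQ => //; apply: IP.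
Qed.

Lemma refine_card (B X : {fset V}) P Q : is_partition B P -> X \in P ->
  is_partition X Q -> (#|` (P `\ X) `|` Q| = #|` P| - 1 + #|` Q|)%N.
Proof.
move=> HP XP HQ.
have I0 : (P `\ X) `&` Q = fset0.
  apply/eqP; rewrite fsetI_eq0; apply/fdisjointP => Y /fsetD1P [YX YP].
  apply/negP => YQ; have [Qne _] := HQ.
  have /fset0Pn [y yY] := Qne Y YQ.
  have yX : y \in X by apply: part_sub HQ YQ yY.
  have [_ [Pdis _]] := HP.
  by have /fdisjointP/(_ y yY) := Pdis Y X YP XP YX; rewrite yX.
have := cardfsUI (P `\ X) Q; rewrite I0 cardfs0 addn0 => ->.
by rewrite (cardfsD1 X P) XP add1n subn1 /=.
Qed.

Lemma part_card (B : {fset V}) P : is_partition B P -> (#|` P| <= 2 ^ #|` B|)%N.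
Proof.
move=> HP; rewrite -card_fpowerset; apply: fsubset_leq_card.
by apply/fsubsetP => X XP; rewrite fpowersetE; apply: part_fsub HP XP.
Qed.

Lemma exists_irr (B : {fset V}) :
  exists P, Dec' B P /\ (forall X, X \in P -> irr' X).
Proof.
have step : forall P, Dec' B P -> ~ (forall X, X \in P -> irr' X) ->
    exists P', Dec' B P' /\ (#|` P| < #|` P'|)%N.
  move=> P HP Hn.
  have [X HX] := not_all_ex_not _ _ Hn.
  have [XP nX] := imply_to_and _ _ HX.
  have [R HR] := not_all_ex_not _ _ nX.
  have [DR nR] := imply_to_and _ _ HR.
  exists ((P `\ X) `|` R); split; first exact: refine_dec.
  rewrite (refine_card HP.1 XP DR.1).
  have R1 : (1 < #|` R|)%N by rewrite ltnNge; apply/negP.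
  have P0 : (0 < #|` P|)%N by rewrite (cardfsD1 X P) XP.
  lia.
have [P HP] : exists P, Dec' B P.
  case: (fset_0Vmem B) => [->|[x xB]].
    exists fset0; split; first split; [|split|].
    - by move=> X; rewrite inE.
    - by move=> X Y; rewrite inE.
    - by move=> x; split; [rewrite inE|move=> [X]; rewrite inE].
    - by move=> c _ X; rewrite inE.
  exists [fset B]; split; first split; [|split|].
  - by move=> X /fset1P ->; apply/fset0Pn; exists x.
  - by move=> X Y /fset1P -> /fset1P ->; rewrite eqxx.
  - move=> y; split; first by move=> yB; exists B => //; apply/fset1P.
    by move=> [X /fset1P ->].
  - by move=> c Hc X /fset1P ->.
suff: forall k P, Dec' B P -> (2 ^ #|` B| - #|` P| <= k)%N ->
    exists P, Dec' B P /\ (forall X, X \in P -> irr' X).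
  by move=> /(_ _ P HP (leqnn _)).
elim => [|k IH] {HP}P HP Hk;
  case: (classic (forall X, X \in P -> irr' X)) => H; try by exists P.
  have [P' [HP' lt]] := step P HP H.
  have := part_card HP'.1; lia.
have [P' [HP' lt]] := step P HP H.
apply: (IH P' HP'); lia.
Qed.

Lemma dec_iff (B : {fset V}) P : integral_decomposition B P <-> Dec' B P.
Proof.
split; first by move=> H; split; [exact: H.1|exact: dec_IC].
by move=> [HP HI]; apply: IC_dec.
Qed.

Lemma irr_iff (X : {fset V}) : irreducible_set X <-> irr' X.
Proof.
split=> H R HR; apply: H; exact/dec_iff.
Qed.

End Aux.

Local Open Scope fset_scope.

Theorem lemma3p4 (n : nat) (B : {fset 'rV[int]_n}) :
  (exists P : {fset {fset 'rV[int]_n}},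
      integral_decomposition B P /\ (forall X, X \in P -> irreducible_set X)) /\
  (forall P Q : {fset {fset 'rV[int]_n}},
      integral_decomposition B P -> (forall X, X \in P -> irreducible_set X) ->
      integral_decomposition B Q -> (forall X, X \in Q -> irreducible_set X) ->
      P = Q).
Proof.
split.
  have [P [HP HI]] := exists_irr B.
  exists P; split; first exact/dec_iff.
  by move=> X XP; apply/irr_iff; apply: HI.
move=> P Q HP IP HQ IQ.
apply: (uniq_dec (proj1 (dec_iff _ _) HP) (proj1 (dec_iff _ _) HQ)).
  by move=> X XP; apply/irr_iff; apply: IP.
by move=> X XP; apply/irr_iff; apply: IQ.
Qed.
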